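(* Let $X$ be as in the context. (1) If $\limsup_{x\to\infty}H_1(x)<1$, then there exist a positive function $f$ on $\mathbb S$ and $\epsilon>0$ such that $\lim_{x\to\infty}f(x)=\infty$, $\mathcal A f(x)<0$ for all sufficiently large $x\in\mathbb S$, and $$\limsup_{x\to\infty}\mathcal A f(x)\le-\Big(\frac{\epsilon}{2}\Big)^2\liminf_{x\to\infty}\frac{v(x)}{x^2(\log x)^{2-\epsilon/2}}\le 0.$$ (2) If $\liminf_{x\to\infty}H_1(x)>1$, then there exist a positive function $f$ on $\mathbb S$ and $\epsilon>0$ such that $\lim_{x\to\infty}f(x)=0$, $\mathcal A f(x)<0$ for all sufficiently large $x\in\mathbb S$, and $$\limsup_{x\to\infty}\mathcal A f(x)\le-\Big(\frac{\epsilon}{2}\Big)^2\liminf_{x\to\infty}\frac{v(x)}{x^2(\log x)^{2+\epsilon/2}}\le 0.$$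
   Context: Let $\mathbb S\subseteq\mathbb Z_{\ge0}$ be an infinite set and let $X$ be an irreducible continuous-time Markov chain on $\mathbb S$ whose generator acts on functions $f:\mathbb S\to\mathbb R$ by $\mathcal A f(x)=\sum_{\eta\in\mathbb Z}\lambda_\eta(x)\big(f(x+\eta)-f(x)\big)$, where $\lambda_\eta(x)$ is the rate of the jump $x\to x+\eta$ (and $\lambda_\eta(x)=0$ whenever $x+\eta\notin\mathbb S$). Standing assumption: (a) there is a finite set $\Gamma\subset\mathbb Z$ such that $\lambda_\eta\equiv0$ for $\eta\notin\Gamma$; (b) $0\le\lambda_\eta(x)<\infty$ for all $x,\eta$. Define $m(x)=\sum_{\eta}\eta\,\lambda_\eta(x)$, $v(x)=\frac12\sum_\eta\eta^2\lambda_\eta(x)$ (positive on $\mathbb S$ by irreducibility), and for a constant $p$ and $x>1$, $H_p(x)=\dfrac{(\log x)(m(x)x-p\,v(x))}{v(x)}$. All limits are as $x\to\infty$ along $\mathbb S$. *)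

(* Defs.v *)
From Stdlib Require Import Reals ZArith List Relations.
From Coquelicot Require Import Coquelicot.
Open Scope R_scope.

(* A state space S ⊆ Z_{>=0}, rates lam η x (rate of jump x -> x+η),
   and a finite list Gam of jump sizes outside of which lam vanishes. *)

Definition sumG (Gam : list Z) (g : Z -> R) : R :=
  fold_right (fun eta acc => g eta + acc) 0 Gam.

Definition gen (Gam : list Z) (lam : Z -> Z -> R) (f : Z -> R) (x : Z) : R :=
  sumG Gam (fun eta => lam eta x * (f (x + eta)%Z - f x)).

Definition drift (Gam : list Z) (lam : Z -> Z -> R) (x : Z) : R :=
  sumG Gam (fun eta => IZR eta * lam eta x).

Definition diffu (Gam : list Z) (lam : Z -> Z -> R) (x : Z) : R :=
  / 2 * sumG Gam (fun eta => IZR eta ^ 2 * lam eta x).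

Definition Hp (Gam : list Z) (lam : Z -> Z -> R) (p : R) (x : Z) : R :=
  ln (IZR x) * (drift Gam lam x * IZR x - p * diffu Gam lam x) / diffu Gam lam x.

Definition step (S : Z -> Prop) (lam : Z -> Z -> R) (x y : Z) : Prop :=
  S x /\ S y /\ 0 < lam (y - x)%Z x.

Definition irreducible (S : Z -> Prop) (lam : Z -> Z -> R) : Prop :=
  forall x y, S x -> S y -> clos_refl_trans Z (step S lam) x y.

(* Infinite subset of Z_{>=0}: unbounded above. *)
Definition unbounded (S : Z -> Prop) : Prop :=
  forall N : Z, exists x, S x /\ (N <= x)%Z.

Definition tail_sup (S : Z -> Prop) (g : Z -> R) (n : nat) : Rbar :=
  Lub_Rbar (fun y => exists x, S x /\ (Z.of_nat n <= x)%Z /\ y = g x).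
Definition tail_inf (S : Z -> Prop) (g : Z -> R) (n : nat) : Rbar :=
  Glb_Rbar (fun y => exists x, S x /\ (Z.of_nat n <= x)%Z /\ y = g x).
Definition limsupS (S : Z -> Prop) (g : Z -> R) : Rbar :=
  Inf_seq (tail_sup S g).
Definition liminfS (S : Z -> Prop) (g : Z -> R) : Rbar :=
  Sup_seq (tail_inf S g).

Definition to_infty_S (S : Z -> Prop) (g : Z -> R) : Prop :=
  forall M : R, exists N : Z, forall x, S x -> (N <= x)%Z -> M < g x.

Definition to_lim_S (S : Z -> Prop) (g : Z -> R) (l : R) : Prop :=
  forall e : R, 0 < e -> exists N : Z, forall x, S x -> (N <= x)%Z -> Rabs (g x - l) < e.

Definition eventually_S (S : Z -> Prop) (P : Z -> Prop) : Prop :=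
  exists N : Z, forall x, S x -> (N <= x)%Z -> P x.

Definition chain_ok (S : Z -> Prop) (Gam : list Z) (lam : Z -> Z -> R) : Prop :=
  (forall x, S x -> (0 <= x)%Z) /\
  unbounded S /\
  NoDup Gam /\
  (forall eta x, S x -> ~ In eta Gam -> lam eta x = 0) /\
  (forall eta x, S x -> 0 <= lam eta x) /\
  (forall eta x, S x -> ~ S (x + eta)%Z -> lam eta x = 0) /\
  irreducible S lam.

(* Main.v *)
Require Import Defs.
From Stdlib Require Import Reals ZArith List.
From Coquelicot Require Import Coquelicot.
From Stdlib Require Import Lra Lia Relations.
Open Scope R_scope.

Lemma Inf_seq_lb (u : nat -> Rbar) n : Rbar_le (Inf_seq u) (u n).
Proof.
  generalize (Inf_seq_correct u). destruct (Inf_seq u) as [l| |]; simpl; intros H; auto.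
  - destruct (u n) as [un| |] eqn:E; simpl; auto.
    + apply Rnot_lt_le; intros Hlt.
      assert (Hp : 0 < (l - un) / 2) by lra.
      destruct (H (mkposreal _ Hp)) as [H1 _]. specialize (H1 n). rewrite E in H1. simpl in H1. lra.
    + destruct (H (mkposreal _ Rlt_0_1)) as [H1 _]. specialize (H1 n). rewrite E in H1. simpl in H1. auto.
  - destruct (u n) as [un| |] eqn:E; simpl; auto.
    + specialize (H un n). rewrite E in H. simpl in H. lra.
    + specialize (H 0 n). rewrite E in H. simpl in H. auto.
Qed.

Lemma Sup_seq_ub (u : nat -> Rbar) n : Rbar_le (u n) (Sup_seq u).
Proof.
  generalize (Sup_seq_correct u). intro H.
  destruct (u n) as [un| |] eqn:E; destruct (Sup_seq u) as [l| |]; simpl in *; auto.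
  - apply Rnot_lt_le; intros Hlt.
    assert (Hp : 0 < (un - l) / 2) by lra.
    destruct (H (mkposreal _ Hp)) as [H1 _]. specialize (H1 n). rewrite E in H1. simpl in H1. lra.
  - specialize (H (un - 1) n). rewrite E in H. simpl in H. lra.
  - destruct (H (mkposreal _ Rlt_0_1)) as [H1 _]. specialize (H1 n). rewrite E in H1. simpl in H1. auto.
  - specialize (H 0 n). rewrite E in H. simpl in H. auto.
Qed.

Lemma limsup_lt S g r : Rbar_lt (limsupS S g) (Finite r) ->
  exists d, 0 < d /\ exists n : nat, forall x, S x -> (Z.of_nat n <= x)%Z -> g x <= r - d.
Proof.
  unfold limsupS. generalize (Inf_seq_correct (tail_sup S g)).
  destruct (Inf_seq (tail_sup S g)) as [l| |]; simpl; intros H Hlt; try contradiction.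
  - assert (Hp : 0 < (r - l) / 2) by lra.
    destruct (H (mkposreal _ Hp)) as [_ [n Hn]]. simpl in Hn.
    exists ((r - l) / 2). split; [lra|]. exists n. intros x Sx Hx.
    assert (Hub := proj1 (Lub_Rbar_correct (fun y => exists x, S x /\ (Z.of_nat n <= x)%Z /\ y = g x)) (g x)
       (ex_intro _ x (conj Sx (conj Hx eq_refl)))).
    unfold tail_sup in Hn. destruct (Lub_Rbar _) as [s| |]; simpl in *; try contradiction; lra.
  - destruct (H (r - 1)) as [n Hn].
    exists 1. split; [lra|]. exists n. intros x Sx Hx.
    assert (Hub := proj1 (Lub_Rbar_correct (fun y => exists x, S x /\ (Z.of_nat n <= x)%Z /\ y = g x)) (g x)
       (ex_intro _ x (conj Sx (conj Hx eq_refl)))).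
    unfold tail_sup in Hn. destruct (Lub_Rbar _) as [s| |]; simpl in *; try contradiction; lra.
Qed.

Lemma liminf_gt S g r : Rbar_lt (Finite r) (liminfS S g) ->
  exists d, 0 < d /\ exists n : nat, forall x, S x -> (Z.of_nat n <= x)%Z -> r + d <= g x.
Proof.
  unfold liminfS. generalize (Sup_seq_correct (tail_inf S g)).
  destruct (Sup_seq (tail_inf S g)) as [l| |]; simpl; intros H Hlt; try contradiction.
  - assert (Hp : 0 < (l - r) / 2) by lra.
    destruct (H (mkposreal _ Hp)) as [_ [n Hn]]. simpl in Hn.
    exists ((l - r) / 2). split; [lra|]. exists n. intros x Sx Hx.
    assert (Hub := proj1 (Glb_Rbar_correct (fun y => exists x, S x /\ (Z.of_nat n <= x)%Z /\ y = g x)) (g x)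
       (ex_intro _ x (conj Sx (conj Hx eq_refl)))).
    unfold tail_inf in Hn. destruct (Glb_Rbar _) as [s| |]; simpl in *; try contradiction; lra.
  - destruct (H (r + 1)) as [n Hn].
    exists 1. split; [lra|]. exists n. intros x Sx Hx.
    assert (Hub := proj1 (Glb_Rbar_correct (fun y => exists x, S x /\ (Z.of_nat n <= x)%Z /\ y = g x)) (g x)
       (ex_intro _ x (conj Sx (conj Hx eq_refl)))).
    unfold tail_inf in Hn. destruct (Glb_Rbar _) as [s| |]; simpl in *; try contradiction; lra.
Qed.

Lemma tail_inf_mono S h n m : (n <= m)%nat -> Rbar_le (tail_inf S h n) (tail_inf S h m).
Proof.
  intros Hnm. unfold tail_inf.
  apply (proj2 (Glb_Rbar_correct _)).
  intros y [x [Sx [Hx ->]]].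
  apply (proj1 (Glb_Rbar_correct _)). exists x. repeat split; auto. lia.
Qed.

Lemma tail_inf_fin S h n N : unbounded S -> (N <= Z.of_nat n)%Z ->
  (forall x, S x -> (N <= x)%Z -> 0 <= h x) ->
  exists t, tail_inf S h n = Finite t /\ 0 <= t /\
     forall x, S x -> (Z.of_nat n <= x)%Z -> t <= h x.
Proof.
  intros Hu HN Hh.
  destruct (Hu (Z.of_nat n)) as [x0 [Sx0 Hx0]].
  assert (Hlb := proj1 (Glb_Rbar_correct (fun y => exists x, S x /\ (Z.of_nat n <= x)%Z /\ y = h x))).
  assert (Hg := proj2 (Glb_Rbar_correct (fun y => exists x, S x /\ (Z.of_nat n <= x)%Z /\ y = h x)) (Finite 0)).
  assert (H0 := Hlb (h x0) (ex_intro _ x0 (conj Sx0 (conj Hx0 eq_refl)))).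
  assert (Hg' : Rbar_le 0 (tail_inf S h n)).
  { apply Hg. intros y [x [Sx [Hx ->]]]. simpl. apply Hh; auto; lia. }
  unfold tail_inf in *.
  destruct (Glb_Rbar _) as [t| |]; simpl in *; try contradiction.
  exists t. repeat split; auto.
  intros x Sx Hx. specialize (Hlb (h x) (ex_intro _ x (conj Sx (conj Hx eq_refl)))). exact Hlb.
Qed.

Lemma tail_sup_le S g n c : (forall x, S x -> (Z.of_nat n <= x)%Z -> g x <= c) ->
  Rbar_le (tail_sup S g n) (Finite c).
Proof.
  intros H. unfold tail_sup. apply (proj2 (Lub_Rbar_correct _)).
  intros y [x [Sx [Hx ->]]]. simpl. auto.
Qed.

Lemma Rbar_le_approx (w z : Rbar) : (forall y : R, Rbar_lt z (Finite y) -> Rbar_le w (Finite y)) ->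
  Rbar_le w z.
Proof.
  intros H. apply Rbar_not_lt_le. intros Hlt.
  destruct z as [z| |]; destruct w as [w| |]; simpl in *; try contradiction.
  - specialize (H ((z + w) / 2) ltac:(lra)). lra.
  - specialize (H (z + 1) ltac:(lra)). exact H.
  - specialize (H (w - 1) I). lra.
  - specialize (H 0 I). exact H.
Qed.

Lemma limsup_bound S g h c (N : Z) : unbounded S -> 0 < c ->
  (forall x, S x -> (N <= x)%Z -> g x <= - c * h x /\ 0 <= h x) ->
  Rbar_le (limsupS S g) (Rbar_mult (Finite (- c)) (liminfS S h)) /\
  Rbar_le (Rbar_mult (Finite (- c)) (liminfS S h)) (Finite 0).
Proof.
  intros Hu Hc H.
  set (n0 := Z.to_nat (Z.max N 0)).
  assert (Hn0 : forall n, (n0 <= n)%nat -> (N <= Z.of_nat n)%Z) by (intros n Hn; unfold n0 in Hn; lia).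
  assert (Hh : forall x, S x -> (N <= x)%Z -> 0 <= h x) by (intros x Sx Hx; apply H; auto).
  assert (Key : forall n, (n0 <= n)%nat -> exists t, tail_inf S h n = Finite t /\ 0 <= t /\
     Rbar_le (limsupS S g) (Finite (- c * t))).
  { intros n Hn. destruct (tail_inf_fin S h n N Hu (Hn0 n Hn) Hh) as [t [Ht [Ht0 Htl]]].
    exists t. repeat split; auto.
    eapply Rbar_le_trans; [apply Inf_seq_lb with (n := n)|].
    apply tail_sup_le. intros x Sx Hx.
    destruct (H x Sx ltac:(specialize (Hn0 n Hn); lia)) as [H1 _].
    specialize (Htl x Sx Hx). nra. }
  destruct (Key n0 (le_n _)) as [t0 [Ht0 [Ht00 _]]].
  assert (HT : Rbar_le (Finite 0) (liminfS S h)).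
  { unfold liminfS. eapply Rbar_le_trans; [|apply Sup_seq_ub with (n := n0)].
    rewrite Ht0. simpl. exact Ht00. }
  split.
  - apply Rbar_le_approx. intros y Hy.
    assert (Hex : exists n, Rbar_lt (Finite (- y / c)) (tail_inf S h n)).
    { generalize (Sup_seq_correct (tail_inf S h)). unfold liminfS in *.
      destruct (Sup_seq (tail_inf S h)) as [r| |]; simpl in *.
      - intros Hs.
        assert (Hp : 0 < r + y / c).
        { assert (- c * r < y) by exact Hy.
          assert (y / c * c = y) by (field; lra). nra. }
        destruct (Hs (mkposreal _ Hp)) as [_ [n Hn]]. exists n. simpl in Hn.
        replace (r - (r + y / c)) with (- y / c) in Hn by (field; lra). exact Hn.
      - intros Hs. exact (Hs (- y / c)).
      - contradiction. }
    destruct Hex as [n Hn].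
    destruct (Key (max n n0) (Nat.le_max_r _ _)) as [t [Ht [_ Hl]]].
    assert (Hm := tail_inf_mono S h n (max n n0) (Nat.le_max_l _ _)).
    rewrite Ht in Hm.
    assert (Hlt : - y / c < t).
    { eapply Rbar_lt_le_trans in Hm; [|exact Hn]. exact Hm. }
    eapply Rbar_le_trans; [exact Hl|]. simpl.
    assert (y / c * c = y) by (field; lra). unfold Rdiv in *. nra.
  - unfold liminfS in *. destruct (Sup_seq (tail_inf S h)) as [r| |]; simpl in *; try contradiction.
    + nra.
    + destruct (Rle_dec 0 (- c)) as [Hd|Hd]; [exfalso; lra|]. simpl. auto.
Qed.

Lemma mvt_nonpos (g g' : R -> R) a b : a <= b ->
  (forall t, a <= t <= b -> is_derive g t (g' t)) ->
  (forall t, a <= t <= b -> g' t <= 0) -> g b <= g a.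
Proof.
  intros Hab Hd Hn. destruct (Req_dec a b) as [->|Hne]; [lra|].
  destruct (MVT_cor2 g g' a b) as [c [Hc1 Hc2]]; [lra| |].
  - intros c Hc; apply is_derive_Reals; auto.
  - assert (g' c <= 0) by (apply Hn; lra). nra.
Qed.

Lemma taylor_fwd (F F1 F2 F3 : R -> R) (M x h : R) : 0 <= h ->
  (forall t, x <= t <= x + h -> is_derive F t (F1 t) /\ is_derive F1 t (F2 t)
     /\ is_derive F2 t (F3 t) /\ F3 t <= M) ->
  F (x + h) - F x - F1 x * h - F2 x * h ^ 2 / 2 <= M * h ^ 3 / 6.
Proof.
  intros Hh Hd.
  assert (G2 : forall t, x <= t <= x + h -> F2 t - F2 x - M * (t - x) <= 0).
  { intros t Ht.
    assert (H := mvt_nonpos (fun s => F2 s - F2 x - M * (s - x)) (fun s => F3 s - M) x t).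
    eapply Rle_trans; [apply H|right; ring]; [lra| |].
    - intros s Hs. destruct (Hd s ltac:(lra)) as [_ [_ [H3 _]]].
      auto_derive; [exact (ex_intro _ _ H3)|].
      replace (Derive (fun x0 : R => F2 x0) s) with (F3 s); [ring|symmetry; apply is_derive_unique; exact H3].
    - intros s Hs. destruct (Hd s ltac:(lra)) as [_ [_ [_ H4]]]. lra. }
  assert (G1 : forall t, x <= t <= x + h ->
     F1 t - F1 x - F2 x * (t - x) - M * (t - x) ^ 2 / 2 <= 0).
  { intros t Ht.
    assert (H := mvt_nonpos (fun s => F1 s - F1 x - F2 x * (s - x) - M * (s - x) ^ 2 / 2)
       (fun s => F2 s - F2 x - M * (s - x)) x t).
    eapply Rle_trans; [apply H|idtac]; [lra| | |lra].
    - intros s Hs. destruct (Hd s ltac:(lra)) as [_ [H3 _]].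
      auto_derive; [exact (ex_intro _ _ H3)|].
      replace (Derive (fun x0 : R => F1 x0) s) with (F2 s); [field|symmetry; apply is_derive_unique; exact H3].
    - intros s Hs. apply G2. lra. }
  assert (H := mvt_nonpos (fun s => F s - F x - F1 x * (s - x) - F2 x * (s - x) ^ 2 / 2
        - M * (s - x) ^ 3 / 6)
       (fun s => F1 s - F1 x - F2 x * (s - x) - M * (s - x) ^ 2 / 2) x (x + h)).
  simpl in H.
  replace (x + h - x) with h in H by ring.
  assert (H' : F (x + h) - F x - F1 x * h - F2 x * h ^ 2 / 2 - M * h ^ 3 / 6 <=
     F x - F x - F1 x * (x - x) - F2 x * (x - x) ^ 2 / 2 - M * (x - x) ^ 3 / 6).
  { apply H; [lra| |].
    - intros s Hs. destruct (Hd s ltac:(lra)) as [H3 _].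
      auto_derive; [exact (ex_intro _ _ H3)|].
      replace (Derive (fun x0 : R => F x0) s) with (F1 s); [field|symmetry; apply is_derive_unique; exact H3].
    - intros s Hs. apply G1. lra. }
  ring_simplify in H'. lra.
Qed.

Lemma taylor_abs (F F1 F2 F3 : R -> R) (M x h : R) :
  (forall t, x - Rabs h <= t <= x + Rabs h -> is_derive F t (F1 t) /\ is_derive F1 t (F2 t)
     /\ is_derive F2 t (F3 t) /\ Rabs (F3 t) <= M) ->
  F (x + h) - F x - F1 x * h - F2 x * h ^ 2 / 2 <= M * Rabs h ^ 3 / 6.
Proof.
  intros Hd. destruct (Rle_or_lt 0 h) as [Hh|Hh].
  - rewrite Rabs_pos_eq in * by lra.
    apply taylor_fwd with F3; auto.
    intros t Ht. destruct (Hd t ltac:(lra)) as [A [B [C D]]].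
    refine (conj A (conj B (conj C _))). eapply Rle_trans; [apply Rle_abs|exact D].
  - rewrite Rabs_left in * by lra.
    assert (H := taylor_fwd (fun t => F (- t)) (fun t => - F1 (- t)) (fun t => F2 (- t))
       (fun t => - F3 (- t)) M (- x) (- h) ltac:(lra)).
    replace (- x + - h) with (- (x + h)) in H by ring.
    rewrite !Ropp_involutive in H.
    replace (M * Rabs h ^ 3 / 6) with (M * (- h) ^ 3 / 6) by (rewrite Rabs_left by lra; ring).
    assert (H' : F (x + h) - F x - - F1 x * - h - F2 x * (- h) ^ 2 / 2 <= M * (- h) ^ 3 / 6).
    { apply H. intros t Ht.
      destruct (Hd (- t) ltac:(lra)) as [A [B [C D]]].
      split; [|split; [|split]].
      + auto_derive; [exact (ex_intro _ _ A)|].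
        replace (Derive (fun x0 : R => F x0) (- t)) with (F1 (- t));
          [ring|symmetry; apply is_derive_unique; exact A].
      + auto_derive; [exact (ex_intro _ _ B)|].
        replace (Derive (fun x0 : R => F1 x0) (- t)) with (F2 (- t));
          [ring|symmetry; apply is_derive_unique; exact B].
      + auto_derive; [exact (ex_intro _ _ C)|].
        replace (Derive (fun x0 : R => F2 x0) (- t)) with (F3 (- t));
          [ring|symmetry; apply is_derive_unique; exact C].
      + eapply Rle_trans; [|exact D]. rewrite <- Rabs_Ropp. apply Rle_abs. }
    eapply Rle_trans; [|exact H']. right. field.
Qed.

Definition Fb (b t : R) := exp (b * ln (ln t)).
Definition Fb1 (b t : R) := b * Fb b t / (ln t * t).
Definition Fb2 (b t : R) := b * Fb b t * (b - 1 - ln t) / (ln t ^ 2 * t ^ 2).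
Definition Qb (b L : R) := 2 * L ^ 2 + (3 - 3 * b) * L + (b ^ 2 - 3 * b + 2).
Definition Fb3 (b t : R) := b * Fb b t * Qb b (ln t) / (ln t ^ 3 * t ^ 3).

Lemma Fb_der b t : 1 < t ->
  is_derive (Fb b) t (Fb1 b t) /\ is_derive (Fb1 b) t (Fb2 b t) /\
  is_derive (Fb2 b) t (Fb3 b t).
Proof.
  intros Ht. assert (Hl : 0 < ln t) by (rewrite <- ln_1; apply ln_increasing; lra).
  unfold Fb3, Fb2, Fb1, Fb, Qb.
  split; [|split].
  - auto_derive; [lra|]. field. lra.
  - auto_derive; [repeat split; try lra; apply Rmult_integral_contrapositive; lra|]. field. lra.
  - auto_derive; [repeat split; try lra; apply Rgt_not_eq; apply Rmult_lt_0_compat; nra|]. field. lra.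
Qed.

Lemma sumG_le Gam (g1 g2 : Z -> R) : (forall e, In e Gam -> g1 e <= g2 e) ->
  sumG Gam g1 <= sumG Gam g2.
Proof.
  induction Gam as [|e G IH]; simpl; intros H; [lra|].
  apply Rplus_le_compat; [apply H; auto|apply IH; intros; apply H; auto].
Qed.

Lemma sumG_lin Gam (f g : Z -> R) A B :
  sumG Gam (fun e => A * f e + B * g e) = A * sumG Gam f + B * sumG Gam g.
Proof. induction Gam as [|e G IH]; simpl; [ring|rewrite IH; ring]. Qed.

Lemma sumG_term Gam (g : Z -> R) e0 : (forall e, In e Gam -> 0 <= g e) -> In e0 Gam ->
  g e0 <= sumG Gam g.
Proof.
  induction Gam as [|e G IH]; simpl; intros H Hin; [contradiction|].
  destruct Hin as [->|Hin].
  - assert (0 <= sumG G g).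
    { clear IH. induction G as [|e' G' IHG]; simpl; [lra|].
      assert (0 <= g e') by (apply H; simpl; auto).
      assert (0 <= sumG G' g) by (apply IHG; intros; apply H; simpl in *; tauto). lra. }
    lra.
  - assert (0 <= g e) by (apply H; auto).
    assert (g e0 <= sumG G g) by (apply IH; auto). lra.
Qed.

Lemma rt1n_step (S : Z -> Prop) lam a b : clos_refl_trans_1n Z (step S lam) a b -> a <> b ->
  exists z, step S lam a z /\ z <> a.
Proof.
  induction 1 as [a|a z b Hs Hr IH]; intros Hne; [congruence|].
  destruct (Z.eq_dec z a) as [->|Hz]; [apply IH; auto|eauto].
Qed.

Lemma diffu_pos S Gam lam x : chain_ok S Gam lam -> S x -> 0 < diffu Gam lam x.
Proof.
  intros [H0 [Hu [Hnd [Hgam [Hnn [Hout Hirr]]]]]] Sx.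
  destruct (Hu (x + 1)%Z) as [y [Sy Hy]].
  assert (Hr := Hirr x y Sx Sy). apply clos_rt_rt1n in Hr.
  destruct (rt1n_step S lam x y Hr ltac:(lia)) as [z [[_ [Sz Hl]] Hz]].
  assert (Hin : In (z - x)%Z Gam).
  { destruct (In_dec Z.eq_dec (z - x)%Z Gam) as [i|ni]; auto.
    rewrite (Hgam _ _ Sx ni) in Hl. lra. }
  unfold diffu.
  assert (Ht : IZR (z - x) ^ 2 * lam (z - x)%Z x <= sumG Gam (fun eta => IZR eta ^ 2 * lam eta x)).
  { apply (sumG_term Gam (fun eta => IZR eta ^ 2 * lam eta x)); auto.
    intros e _. apply Rmult_le_pos; [apply pow2_ge_0|apply Hnn; auto]. }
  assert (IZR (z - x) <> 0) by (apply not_0_IZR; lia).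
  assert (0 < IZR (z - x) ^ 2) by (simpl; rewrite Rmult_1_r; apply Rsqr_pos_lt; auto).
  assert (0 < IZR (z - x) ^ 2 * lam (z - x)%Z x) by (apply Rmult_lt_0_compat; auto).
  lra.
Qed.

Lemma K_bound Gam e : In e Gam -> Rabs (IZR e) <= sumG Gam (fun e => Rabs (IZR e)).
Proof.
  intros Hin. apply (sumG_term Gam (fun e => Rabs (IZR e))); auto.
  intros; apply Rabs_pos.
Qed.

Lemma K_nonneg Gam : 0 <= sumG Gam (fun e => Rabs (IZR e)).
Proof. induction Gam; simpl; [lra|]. assert (0 <= Rabs (IZR a)) by apply Rabs_pos. lra. Qed.

Lemma Rabs_le_inv a b : Rabs a <= b -> - b <= a <= b.
Proof.
  intros H. assert (H1 := Rle_abs a). assert (H2 := Rle_abs (- a)). rewrite Rabs_Ropp in H2. lra.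
Qed.

Lemma ln3 : 1 <= ln 3.
Proof. rewrite <- (ln_exp 1). apply ln_le; [apply exp_pos|apply exp_le_3]. Qed.

Lemma Fb_pos b t : 0 < Fb b t.
Proof. apply exp_pos. Qed.

Lemma Fb_le b t : 3 <= t -> b <= 1 -> Fb b t <= ln t.
Proof.
  intros Ht Hb. assert (HL : 1 <= ln t).
  { eapply Rle_trans; [apply ln3|apply ln_le; lra]. }
  assert (0 <= ln (ln t)) by (rewrite <- ln_1; apply ln_le; lra).
  unfold Fb. rewrite <- (exp_ln (ln t)) at 2 by lra.
  destruct (Req_dec (b * ln (ln t)) (ln (ln t))) as [E|E]; [rewrite E; lra|].
  left. apply exp_increasing. nra.
Qed.

Lemma Fb_ge b t : 3 <= t -> -1 <= b -> / ln t <= Fb b t.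
Proof.
  intros Ht Hb. assert (HL : 1 <= ln t).
  { eapply Rle_trans; [apply ln3|apply ln_le; lra]. }
  assert (0 <= ln (ln t)) by (rewrite <- ln_1; apply ln_le; lra).
  unfold Fb. rewrite <- (exp_ln (ln t)) at 1 by lra. rewrite <- exp_Ropp.
  destruct (Req_dec (b * ln (ln t)) (- ln (ln t))) as [E|E]; [rewrite E; lra|].
  left. apply exp_increasing. nra.
Qed.

Lemma Fb3_bound b t : 3 <= t -> Rabs b <= 1/2 -> Rabs (Fb3 b t) <= 6 / t ^ 3.
Proof.
  intros Ht Hb. assert (HL : 1 <= ln t).
  { eapply Rle_trans; [apply ln3|apply ln_le; lra]. }
  assert (HP := Fb_le b t Ht ltac:(apply Rabs_le_inv in Hb; lra)).
  assert (HP0 := Fb_pos b t).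
  apply Rabs_le_inv in Hb.
  set (L := ln t) in *. set (P := Fb b t) in *.
  assert (HQ0 : 0 < Qb b L) by (unfold Qb; nra).
  assert (HQ1 : Qb b L <= 11 * L ^ 2) by (unfold Qb; nra).
  assert (Ht3 : 0 < t ^ 3) by (apply pow_lt; lra).
  assert (HL3 : 0 < L ^ 3) by (apply pow_lt; lra).
  unfold Fb3. fold L. fold P.
  apply Rabs_le. split.
  - apply Rle_trans with (- (P * Qb b L / 2) / (L ^ 3 * t ^ 3)).
    + apply Rle_trans with (- (11 * L ^ 3 / 2) / (L ^ 3 * t ^ 3)).
      * replace (- (11 * L ^ 3 / 2) / (L ^ 3 * t ^ 3)) with (- (11 / 2) * / t ^ 3) by (field; lra).
        assert (0 < / t ^ 3) by (apply Rinv_0_lt_compat; lra). unfold Rdiv. nra.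
      * unfold Rdiv. apply Rmult_le_compat_r; [left; apply Rinv_0_lt_compat; nra|].
        assert (P * Qb b L <= L * (11 * L ^ 2)) by (apply Rmult_le_compat; lra).
        simpl in *. nra.
    + unfold Rdiv. apply Rmult_le_compat_r; [left; apply Rinv_0_lt_compat; nra|].
      assert (0 < P * Qb b L) by (apply Rmult_lt_0_compat; lra). nra.
  - apply Rle_trans with ((P * Qb b L / 2) / (L ^ 3 * t ^ 3)).
    + unfold Rdiv. apply Rmult_le_compat_r; [left; apply Rinv_0_lt_compat; nra|].
      assert (0 < P * Qb b L) by (apply Rmult_lt_0_compat; lra). nra.
    + apply Rle_trans with ((11 * L ^ 3 / 2) / (L ^ 3 * t ^ 3)).
      * unfold Rdiv. apply Rmult_le_compat_r; [left; apply Rinv_0_lt_compat; nra|].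
        assert (P * Qb b L <= L * (11 * L ^ 2)) by (apply Rmult_le_compat; lra).
        simpl in *. nra.
      * replace ((11 * L ^ 3 / 2) / (L ^ 3 * t ^ 3)) with ((11 / 2) * / t ^ 3) by (field; lra).
        assert (0 < / t ^ 3) by (apply Rinv_0_lt_compat; lra). unfold Rdiv. nra.
Qed.

Lemma gen_bound S Gam lam b x : chain_ok S Gam lam -> S x -> Rabs b <= 1/2 ->
  sumG Gam (fun e => Rabs (IZR e)) + 3 <= IZR x -> 2 * sumG Gam (fun e => Rabs (IZR e)) <= IZR x ->
  gen Gam lam (fun z => Fb b (IZR z)) x <=
    Fb1 b (IZR x) * drift Gam lam x + Fb2 b (IZR x) * diffu Gam lam x
    + 16 * sumG Gam (fun e => Rabs (IZR e)) * diffu Gam lam x / IZR x ^ 3.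
Proof.
  intros Hc Sx Hb HK1 HK2.
  set (K := sumG Gam (fun e => Rabs (IZR e))) in *.
  set (X := IZR x) in *.
  assert (HK0 : 0 <= K) by apply K_nonneg.
  assert (HX3 : 0 < X ^ 3) by (apply pow_lt; lra).
  assert (Hu : 0 < / X ^ 3) by (apply Rinv_0_lt_compat; lra).
  destruct Hc as [_ [_ [_ [_ [Hnn _]]]]].
  unfold gen.
  apply Rle_trans with (sumG Gam (fun e => Fb1 b X * (IZR e * lam e x)
       + (Fb2 b X / 2 + 8 * K / X ^ 3) * (IZR e ^ 2 * lam e x))).
  - apply sumG_le. intros e Hin.
    rewrite plus_IZR. fold X. set (E := IZR e).
    assert (HE : Rabs E <= K) by (apply K_bound; auto).
    assert (T := taylor_abs (Fb b) (Fb1 b) (Fb2 b) (Fb3 b) (48 / X ^ 3) X E).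
    assert (T' : Fb b (X + E) - Fb b X - Fb1 b X * E - Fb2 b X * E ^ 2 / 2 <= 48 / X ^ 3 * Rabs E ^ 3 / 6).
    { apply T. intros t Ht.
      destruct (Fb_der b t ltac:(lra)) as [D1 [D2 D3]].
      split; [exact D1|split; [exact D2|split; [exact D3|]]].
      eapply Rle_trans; [apply Fb3_bound; lra|].
      assert (Hpt : (X / 2) ^ 3 <= t ^ 3) by (apply pow_incr; lra).
      assert (0 < (X / 2) ^ 3) by (apply pow_lt; lra).
      apply Rle_trans with (6 / (X / 2) ^ 3).
      + unfold Rdiv. apply Rmult_le_compat_l; [lra|]. apply Rinv_le_contravar; lra.
      + right. field. lra. }
    assert (HE3 : Rabs E ^ 3 <= K * E ^ 2).
    { replace (Rabs E ^ 3) with (Rabs E * E ^ 2) by (rewrite <- (pow2_abs E); ring).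
      apply Rmult_le_compat_r; [apply pow2_ge_0|exact HE]. }
    assert (Hl : 0 <= lam e x) by (apply Hnn; auto).
    assert (Hx : 48 / X ^ 3 * Rabs E ^ 3 / 6 <= 8 * K / X ^ 3 * E ^ 2).
    { unfold Rdiv. replace (48 * / X ^ 3 * Rabs E ^ 3 * / 6) with (8 * / X ^ 3 * Rabs E ^ 3) by (field; lra).
      replace (8 * K * / X ^ 3 * E ^ 2) with (8 * / X ^ 3 * (K * E ^ 2)) by ring.
      apply Rmult_le_compat_l; [lra|exact HE3]. }
    assert (Hd : Fb b (X + E) - Fb b X <= Fb1 b X * E + (Fb2 b X / 2 + 8 * K / X ^ 3) * E ^ 2).
    { assert (Fb2 b X * E ^ 2 / 2 = Fb2 b X / 2 * E ^ 2) by field. lra. }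
    apply Rle_trans with (lam e x * (Fb1 b X * E + (Fb2 b X / 2 + 8 * K / X ^ 3) * E ^ 2)).
    + apply Rmult_le_compat_l; auto.
    + right. ring.
  - rewrite sumG_lin. unfold drift, diffu. right. field. lra.
Qed.

Lemma Rpower_rel b X : 1 < X -> Rpower (ln X) (2 - b) = ln X ^ 2 / Fb b X.
Proof.
  intros HX. assert (HL : 0 < ln X) by (rewrite <- ln_1; apply ln_increasing; lra).
  assert (HP := Fb_pos b X).
  apply (Rmult_eq_reg_r (Fb b X)); [|lra].
  unfold Rpower, Fb. rewrite <- exp_plus.
  replace ((2 - b) * ln (ln X) + b * ln (ln X)) with (ln (ln X) + ln (ln X)) by ring.
  rewrite exp_plus, exp_ln by lra. field. fold (Fb b X). lra.
Qed.

Lemma ident b X m v : 1 < X -> v <> 0 ->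
  Fb1 b X * m + Fb2 b X * v =
  b * (ln X * (m * X - 1 * v) / v + b - 1) * (v / (X ^ 2 * Rpower (ln X) (2 - b))).
Proof.
  intros HX Hv. assert (HL : 0 < ln X) by (rewrite <- ln_1; apply ln_increasing; lra).
  assert (HP := Fb_pos b X).
  rewrite Rpower_rel by lra. unfold Fb1, Fb2.
  field. repeat split; lra.
Qed.

Lemma err_bound a b K X v : 0 < a -> Rabs b <= 1/2 -> 0 <= K -> 0 < v -> 3 <= X ->
  2048 * K / a ^ 2 + 1 <= ln X ->
  16 * K * v / X ^ 3 <= 2 * a ^ 2 * (v / (X ^ 2 * Rpower (ln X) (2 - b))).
Proof.
  intros Ha Hb HK Hv HX HLX.
  assert (HL : 1 <= ln X) by (eapply Rle_trans; [apply ln3|apply ln_le; lra]).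
  apply Rabs_le_inv in Hb.
  assert (HP := Fb_ge b X HX ltac:(lra)).
  assert (HP0 := Fb_pos b X).
  rewrite Rpower_rel by lra.
  set (L := ln X) in *. set (P := Fb b X) in *.
  assert (HPL : 1 <= P * L).
  { apply Rmult_le_reg_r with (/ L); [apply Rinv_0_lt_compat; lra|].
    replace (P * L * / L) with P by (field; lra). lra. }
  assert (HX4 : (L / 4) ^ 4 <= X).
  { assert (E : exp (L / 4) ^ 4 = X).
    { simpl. rewrite Rmult_1_r, <- !exp_plus.
      replace (L / 4 + (L / 4 + (L / 4 + L / 4))) with L by field.
      unfold L. apply exp_ln. lra. }
    rewrite <- E. apply pow_incr. split; [lra|].
    destruct (Req_dec (L/4) 0); [rewrite H, exp_0; lra|].
    assert (H1 := exp_ineq1 (L / 4) H). lra. }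
  assert (Ha2 : 0 < a ^ 2) by (apply pow_lt; lra).
  assert (HaL : 2048 * K <= a ^ 2 * L).
  { assert (2048 * K / a ^ 2 * a ^ 2 = 2048 * K) by (field; lra). nra. }
  assert (h1 : 8 * K * L ^ 3 <= a ^ 2 * X).
  { assert (0 <= L ^ 3) by (apply pow_le; lra).
    assert (2048 * K * L ^ 3 <= a ^ 2 * L * L ^ 3) by (apply Rmult_le_compat_r; lra).
    replace ((L / 4) ^ 4) with (L * L ^ 3 / 256) in HX4 by (simpl; field). nra. }
  assert (h2 : 8 * K * L ^ 2 <= a ^ 2 * P * X).
  { assert (0 <= 8 * K * L ^ 2) by (assert (0 <= L^2) by (apply pow_le; lra); nra).
    apply Rle_trans with (8 * K * L ^ 2 * (P * L)); [nra|].
    replace (8 * K * L ^ 2 * (P * L)) with (P * (8 * K * L ^ 3)) by ring.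
    replace (a ^ 2 * P * X) with (P * (a ^ 2 * X)) by ring.
    apply Rmult_le_compat_l; lra. }
  assert (HX3 : 0 < X ^ 3) by (apply pow_lt; lra).
  assert (HL2 : 0 < L ^ 2) by (apply pow_lt; lra).
  replace (16 * K * v / X ^ 3) with (2 * v / (L ^ 2 * X ^ 3) * (8 * K * L ^ 2)) by (field; lra).
  replace (2 * a ^ 2 * (v / (X ^ 2 * (L ^ 2 / P)))) with (2 * v / (L ^ 2 * X ^ 3) * (a ^ 2 * P * X))
    by (field; repeat split; lra).
  apply Rmult_le_compat_l; [|exact h2].
  unfold Rdiv. apply Rmult_le_pos; [lra|]. left. apply Rinv_0_lt_compat. nra.
Qed.

Lemma core S Gam lam a b : chain_ok S Gam lam -> 0 < a -> Rabs b <= 1/2 ->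
  exists N : Z, forall x, S x -> (N <= x)%Z ->
    0 < diffu Gam lam x / (IZR x ^ 2 * Rpower (ln (IZR x)) (2 - b)) /\
    gen Gam lam (fun z => Fb b (IZR z)) x <=
      (b * (Hp Gam lam 1 x + b - 1) + 2 * a ^ 2) *
      (diffu Gam lam x / (IZR x ^ 2 * Rpower (ln (IZR x)) (2 - b))).
Proof.
  intros Hc Ha Hb.
  set (K := sumG Gam (fun e => Rabs (IZR e))).
  assert (HK0 : 0 <= K) by apply K_nonneg.
  set (R0 := 2 * K + 3 + exp (2048 * K / a ^ 2 + 1)).
  exists (up R0). intros x Sx Hx.
  destruct (archimed R0) as [HR0 _].
  apply IZR_le in Hx.
  set (X := IZR x) in *.
  assert (He := exp_pos (2048 * K / a ^ 2 + 1)).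
  assert (HX : R0 < X) by lra. unfold R0 in HX.
  assert (HLX : 2048 * K / a ^ 2 + 1 <= ln X).
  { rewrite <- (ln_exp (2048 * K / a ^ 2 + 1)). apply ln_le; lra. }
  assert (Hv := diffu_pos S Gam lam x Hc Sx).
  assert (HRp : 0 < Rpower (ln X) (2 - b)) by apply exp_pos.
  assert (HX2 : 0 < X ^ 2) by (apply pow_lt; lra).
  split.
  - apply Rdiv_lt_0_compat; [lra|]. apply Rmult_lt_0_compat; lra.
  - eapply Rle_trans; [apply (gen_bound S Gam lam b x Hc Sx Hb); fold K X; lra|].
    fold K X.
    rewrite ident by lra. unfold Hp. fold X.
    assert (Herr := err_bound a b K X (diffu Gam lam x) Ha Hb HK0 Hv ltac:(lra) HLX).
    lra.
Qed.

Lemma lnln_large c : exists N : Z, forall x : Z, (N <= x)%Z -> c < ln (ln (IZR x)).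
Proof.
  set (R1 := exp (exp (Rabs c + 1)) + 3).
  exists (up R1). intros x Hx. destruct (archimed R1) as [HR _].
  apply IZR_le in Hx. set (X := IZR x) in *.
  assert (HXR : R1 < X) by lra. unfold R1 in HXR.
  assert (H0 := exp_pos (exp (Rabs c + 1))).
  assert (H1 : exp (Rabs c + 1) <= ln X).
  { rewrite <- (ln_exp (exp (Rabs c + 1))). apply ln_le; lra. }
  assert (H2 := exp_pos (Rabs c + 1)).
  assert (H3 : Rabs c + 1 <= ln (ln X)).
  { rewrite <- (ln_exp (Rabs c + 1)). apply ln_le; lra. }
  assert (H4 := Rle_abs c). lra.
Qed.

Lemma maxZ_le (A B x : Z) : (Z.max A B <= x)%Z -> (A <= x)%Z /\ (B <= x)%Z.
Proof. lia. Qed.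

Theorem mainTheorem2 (S : Z -> Prop) (Gam : list Z) (lam : Z -> Z -> R) :
  chain_ok S Gam lam ->
  (Rbar_lt (limsupS S (Hp Gam lam 1)) (Finite 1) ->
   exists (f : Z -> R) (eps : R), 0 < eps /\
     (forall x, S x -> 0 < f x) /\
     to_infty_S S f /\
     eventually_S S (fun x => gen Gam lam f x < 0) /\
     Rbar_le (limsupS S (gen Gam lam f))
       (Rbar_mult (Finite (- (eps / 2) ^ 2))
          (liminfS S (fun x => diffu Gam lam x /
                (IZR x ^ 2 * Rpower (ln (IZR x)) (2 - eps / 2))))) /\
     Rbar_le
       (Rbar_mult (Finite (- (eps / 2) ^ 2))
          (liminfS S (fun x => diffu Gam lam x /
                (IZR x ^ 2 * Rpower (ln (IZR x)) (2 - eps / 2)))))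
       (Finite 0)) /\
  (Rbar_lt (Finite 1) (liminfS S (Hp Gam lam 1)) ->
   exists (f : Z -> R) (eps : R), 0 < eps /\
     (forall x, S x -> 0 < f x) /\
     to_lim_S S f 0 /\
     eventually_S S (fun x => gen Gam lam f x < 0) /\
     Rbar_le (limsupS S (gen Gam lam f))
       (Rbar_mult (Finite (- (eps / 2) ^ 2))
          (liminfS S (fun x => diffu Gam lam x /
                (IZR x ^ 2 * Rpower (ln (IZR x)) (2 + eps / 2))))) /\
     Rbar_le
       (Rbar_mult (Finite (- (eps / 2) ^ 2))
          (liminfS S (fun x => diffu Gam lam x /
                (IZR x ^ 2 * Rpower (ln (IZR x)) (2 + eps / 2)))))
       (Finite 0)).
Proof.
  intros Hc. assert (Hu : unbounded S) by apply Hc.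
  split.
  - intros Hls.
    destruct (limsup_lt S _ 1 Hls) as [d [Hd [n1 Hn1]]].
    set (a := Rmin (d / 4) (1 / 2)).
    assert (Ha : 0 < a) by (unfold a; apply Rmin_glb_lt; lra).
    assert (Ha1 : a <= d / 4) by apply Rmin_l.
    assert (Ha2 : a <= 1 / 2) by apply Rmin_r.
    assert (Hb : Rabs a <= 1 / 2) by (rewrite Rabs_pos_eq; lra).
    destruct (core S Gam lam a a Hc Ha Hb) as [N HN].
    exists (fun z => Fb a (IZR z)), (2 * a).
    replace (2 * a / 2) with a by field.
    assert (Hev : forall x, S x -> (Z.max N (Z.of_nat n1) <= x)%Z ->
       gen Gam lam (fun z => Fb a (IZR z)) x <=
         - a ^ 2 * (diffu Gam lam x / (IZR x ^ 2 * Rpower (ln (IZR x)) (2 - a))) /\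
       0 <= diffu Gam lam x / (IZR x ^ 2 * Rpower (ln (IZR x)) (2 - a))).
    { intros x Sx Hx. apply maxZ_le in Hx. destruct Hx as [Hx1 Hx2].
      destruct (HN x Sx Hx1) as [HD Hg]. specialize (Hn1 x Sx Hx2).
      split; [|lra].
      eapply Rle_trans; [exact Hg|]. apply Rmult_le_compat_r; [lra|]. nra. }
    split; [lra|]. split; [intros; apply Fb_pos|]. split.
    + intros M. destruct (lnln_large (ln (Rabs M + 1) / a)) as [N2 HN2].
      exists N2. intros x Sx Hx. specialize (HN2 x Hx).
      unfold Fb. apply Rlt_le_trans with (Rabs M + 1); [assert (H := Rle_abs M); lra|].
      rewrite <- (exp_ln (Rabs M + 1)) at 1 by (assert (H := Rabs_pos M); lra).
      left. apply exp_increasing.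
      assert (ln (Rabs M + 1) / a * a = ln (Rabs M + 1)) by (field; lra). nra.
    + split.
      * exists (Z.max N (Z.of_nat n1)). intros x Sx Hx.
        destruct (Hev x Sx Hx) as [H1 _].
        destruct (HN x Sx (proj1 (maxZ_le _ _ _ Hx))) as [HD _].
        assert (0 < a ^ 2) by (apply pow_lt; lra). nra.
      * apply (limsup_bound S _ _ (a ^ 2) (Z.max N (Z.of_nat n1)) Hu); [apply pow_lt; lra|].
        exact Hev.
  - intros Hli.
    destruct (liminf_gt S _ 1 Hli) as [d [Hd [n1 Hn1]]].
    set (a := Rmin (d / 4) (1 / 2)).
    assert (Ha : 0 < a) by (unfold a; apply Rmin_glb_lt; lra).
    assert (Ha1 : a <= d / 4) by apply Rmin_l.
    assert (Ha2 : a <= 1 / 2) by apply Rmin_r.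
    assert (Hb : Rabs (- a) <= 1 / 2) by (rewrite Rabs_Ropp, Rabs_pos_eq; lra).
    destruct (core S Gam lam a (- a) Hc Ha Hb) as [N HN].
    exists (fun z => Fb (- a) (IZR z)), (2 * a).
    replace (2 * a / 2) with a by field.
    assert (Hev : forall x, S x -> (Z.max N (Z.of_nat n1) <= x)%Z ->
       gen Gam lam (fun z => Fb (- a) (IZR z)) x <=
         - a ^ 2 * (diffu Gam lam x / (IZR x ^ 2 * Rpower (ln (IZR x)) (2 + a))) /\
       0 <= diffu Gam lam x / (IZR x ^ 2 * Rpower (ln (IZR x)) (2 + a))).
    { intros x Sx Hx. apply maxZ_le in Hx. destruct Hx as [Hx1 Hx2].
      destruct (HN x Sx Hx1) as [HD Hg]. specialize (Hn1 x Sx Hx2).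
      replace (2 - - a) with (2 + a) in HD, Hg by ring.
      split; [|lra].
      eapply Rle_trans; [exact Hg|]. apply Rmult_le_compat_r; [lra|]. nra. }
    split; [lra|]. split; [intros; apply Fb_pos|]. split.
    + intros e He. destruct (lnln_large (- ln e / a)) as [N2 HN2].
      exists N2. intros x Sx Hx. specialize (HN2 x Hx).
      rewrite Rminus_0_r, Rabs_pos_eq by (left; apply Fb_pos).
      unfold Fb. rewrite <- (exp_ln e) by lra.
      apply exp_increasing.
      assert (- ln e / a * a = - ln e) by (field; lra). nra.
    + split.
      * exists (Z.max N (Z.of_nat n1)). intros x Sx Hx.
        destruct (Hev x Sx Hx) as [H1 _].
        destruct (HN x Sx (proj1 (maxZ_le _ _ _ Hx))) as [HD _].
        replace (2 - - a) with (2 + a) in HD by ring.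
        assert (0 < a ^ 2) by (apply pow_lt; lra). nra.
      * apply (limsup_bound S _ _ (a ^ 2) (Z.max N (Z.of_nat n1)) Hu); [apply pow_lt; lra|].
        exact Hev.
Qed.
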